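(* If every geodesic on $\Sigma_\Gamma$ intersects the open ball $B(\pi(x),\rho)$, then $S^+(\ell,\rho,x)$ is $\varepsilon$-relatively dense for some real $\varepsilon>0$.
   Context: $\mathbb{D}=\{z\in\mathbb{C}:|z|<1\}$ with hyperbolic metric $d$ induced by $ds=2|dz|/(1-|z|^2)$; geodesics are parametrised with unit speed and the normal bundle of an oriented geodesic is oriented by the standard orientation of $\mathbb{D}$ and that of the geodesic. Standing setting: $\Gamma$ is a cocompact Fuchsian group with fundamental domain $\tau$ a hyperbolic polygon whose side-pairing generators are none of them their own inverse; $\Sigma_\Gamma=\Gamma\backslash\mathbb{D}$ with quotient map $\pi$ and induced metric; $\ell$ is a geodesic in $\mathbb{D}$ with unit-speed parametrisation $\kappa_\ell$ such that the image of $\{(\kappa_\ell(t),\kappa_\ell'(t))\}$ in $\operatorname{ST}(\Sigma_\Gamma)$ is a dense orbit of the geodesic flow; $x\in\tau^\circ$ and $\rho>0$. For a geodesic $k$ with unit-speed parametrisation $\kappa$: $\overline{\mathcal{N}(k,\rho)}^+$ is the union of $\{y:d(y,k)<\rho\}$ with the component of its boundary on the positive side of $k$; $p_k$ is orthogonal projection onto $k$; $S^+(k,\rho,x)=\kappa^{-1}(p_k(\Gamma(x)\cap\overline{\mathcal{N}(k,\rho)}^+))\subseteq\mathbb{R}$. A set $S\subseteq\mathbb{R}$ is $\varepsilon$-relatively dense if every $t\in\mathbb{R}$ has some $s\in S$ with $|t-s|\le\varepsilon$. *)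

(* Defs.v *)
From Stdlib Require Import Reals List Arith.
From Coquelicot Require Import Coquelicot.

Open Scope R_scope.

Definition in_disk (z : C) : Prop := Cmod z < 1.

(** Hyperbolic distance of the metric ds = 2|dz|/(1-|z|^2):
    d(z,w) = 2 artanh(|z-w| / |1 - conj(w) z|) = ln((1+t)/(1-t)). *)
Definition hdist (z w : C) : R :=
  let t := Cmod (z - w)%C / Cmod (1 - Cconj w * z)%C in
  ln ((1 + t) / (1 - t)).

Definition is_geodesic (k : R -> C) : Prop :=
  (forall t, in_disk (k t)) /\ (forall s t, hdist (k s) (k t) = Rabs (t - s)).

Definition unit_tangent (z v : C) : Prop :=
  in_disk z /\ 2 * Cmod v / (1 - Cmod z ^ 2) = 1.

Definition SU11 (g : C * C) : Prop := Cmod (fst g) ^ 2 - Cmod (snd g) ^ 2 = 1.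

Definition gmul (g h : C * C) : C * C :=
  ((fst g * fst h + snd g * Cconj (snd h))%C,
   (fst g * snd h + snd g * Cconj (fst h))%C).

Definition ginv (g : C * C) : C * C := (Cconj (fst g), (- snd g)%C).

Definition gone : C * C := (RtoC 1, RtoC 0).

Definition act (g : C * C) (z : C) : C :=
  ((fst g * z + snd g) / (Cconj (snd g) * z + Cconj (fst g)))%C.

(** complex derivative of [act g] at z (using |a|^2-|b|^2 = 1) *)
Definition dact (g : C * C) (z : C) : C :=
  (/ ((Cconj (snd g) * z + Cconj (fst g)) * (Cconj (snd g) * z + Cconj (fst g))))%C.

(** g is the identity of PSU(1,1) = SU(1,1)/{+-1} *)
Definition is_id_psu (g : C * C) : Prop := g = gone \/ g = (RtoC (-1), RtoC 0).

(** A Fuchsian group, given as a subgroup of SU(1,1) whose image in PSU(1,1)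
    is discrete (the identity is isolated). *)
Definition fuchsian (G : C * C -> Prop) : Prop :=
  (forall g, G g -> SU11 g) /\ G gone /\
  (forall g h, G g -> G h -> G (gmul g h)) /\
  (forall g, G g -> G (ginv g)) /\
  (exists e, 0 < e /\ forall g, G g -> Cmod (snd g) < e ->
      (Cmod (fst g - 1)%C < e -> g = gone) /\
      (Cmod (fst g + 1)%C < e -> g = (RtoC (-1), RtoC 0))).

(** The quotient G\D is compact. *)
Definition cocompact (G : C * C -> Prop) : Prop :=
  exists r, r < 1 /\ forall z, in_disk z -> exists g, G g /\ Cmod (act g z) <= r.

Definition interior_C (A : C -> Prop) (w : C) : Prop :=
  exists r, 0 < r /\ forall u, Cmod (u - w)%C < r -> A u.

Definition hseg (y z : C) (w : C) : Prop :=
  in_disk w /\ hdist y w + hdist w z = hdist y z.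

Definition hconvex (A : C -> Prop) : Prop :=
  forall y z, A y -> A z -> forall w, hseg y z w -> A w.

Definition hhull (vs : list C) (w : C) : Prop :=
  forall A : C -> Prop, hconvex A -> (forall v, In v vs -> A v) -> A w.

Definition side (vs : list C) (i : nat) : C -> Prop :=
  hseg (nth i vs (RtoC 0)) (nth (Nat.modulo (S i) (length vs)) vs (RtoC 0)).

(** tau is the compact hyperbolic polygon with vertices vs (listed in cyclic
    order): vertices in D, tau their convex hull, every vertex an extreme
    point, and consecutive vertices span boundary sides. *)
Definition hyp_polygon (vs : list C) (tau : C -> Prop) : Prop :=
  (3 <= length vs)%nat /\
  (forall v, In v vs -> in_disk v) /\
  (forall w, tau w <-> hhull vs w) /\
  (forall i, (i < length vs)%nat ->
      ~ hhull (firstn i vs ++ skipn (S i) vs) (nth i vs (RtoC 0))) /\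
  (forall i, (i < length vs)%nat -> forall w, side vs i w -> ~ interior_C tau w).

Definition fundamental_domain (G : C * C -> Prop) (tau : C -> Prop) : Prop :=
  (forall z, in_disk z -> exists g w, G g /\ tau w /\ z = act g w) /\
  (forall g, G g -> ~ is_id_psu g ->
      forall w, interior_C tau w -> ~ interior_C tau (act g w)).

Definition side_pairing (G : C * C -> Prop) (vs : list C) (tau : C -> Prop)
    (i : nat) (g : C * C) : Prop :=
  G g /\ ~ is_id_psu g /\
  exists j, (j < length vs)%nat /\
    (forall w, side vs j w <-> exists u, side vs i u /\ w = act g u) /\
    (forall w, (tau w /\ exists u, tau u /\ w = act g u) <-> side vs j w).

(** the image of t |-> (k t, k' t) in ST(G\D) is dense, i.e. its G-orbit is
    dense in ST(D) (G acting on tangent vectors by the derivative) *)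
Definition dense_in_ST (G : C * C -> Prop) (k : R -> C) : Prop :=
  forall z v, unit_tangent z v -> forall e, 0 < e ->
    exists t w g, is_derive k t w /\ G g /\
      Cmod (act g (k t) - z)%C < e /\ Cmod (dact g (k t) * w - v)%C < e.

(** kappa(s) = p_k(y): the orthogonal projection (nearest point) of y on k *)
Definition is_foot (k : R -> C) (y : C) (s : R) : Prop :=
  forall u, hdist y (k s) <= hdist y (k u).

(** y lies on the positive side of the oriented geodesic k, whose foot is
    k(s): the normal direction at k(s) pointing to y is i * k'(s)
    times a positive number, i.e. y - k(s) points to the left of k'(s). *)
Definition pos_side (k : R -> C) (s : R) (y : C) : Prop :=
  exists v, is_derive k s v /\ 0 < Im (Cconj v * (y - k s))%C.

Definition nbhd_plus (k : R -> C) (rho : R) (y : C) : Prop :=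
  exists s, is_foot k y s /\
    (hdist y (k s) < rho \/ (hdist y (k s) = rho /\ pos_side k s y)).

(** S^+(k, rho, x) = k^{-1}(p_k(G(x) /\ N^+(k,rho))) *)
Definition S_plus (G : C * C -> Prop) (k : R -> C) (rho : R) (x : C) (t : R)
  : Prop :=
  exists g, G g /\ nbhd_plus k rho (act g x) /\ is_foot k (act g x) t.

Definition rel_dense (eps : R) (S : R -> Prop) : Prop :=
  forall t, exists s, S s /\ Rabs (t - s) <= eps.

(* Main.v *)
Require Import Defs.
From Stdlib Require Import Reals List.
From Coquelicot Require Import Coquelicot.
From Stdlib Require Import Lra Lia Psatz Classical IndefiniteDescription.
From Coquelicot Require Import Coquelicot.
Open Scope R_scope.

Lemma Cmod_sq z : Cmod z ^ 2 = fst z ^ 2 + snd z ^ 2.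
Proof. unfold Cmod. rewrite pow2_sqrt; [ring|nra]. Qed.

Lemma D2 a b : Cmod (1 - Cconj b * a)%C ^ 2 - Cmod (a - b)%C ^ 2
  = (1 - Cmod a ^ 2) * (1 - Cmod b ^ 2).
Proof. rewrite !Cmod_sq. destruct a as [a1 a2], b as [b1 b2]. simpl. ring. Qed.

Definition pd (a b : C) : R := Cmod (a - b)%C / Cmod (1 - Cconj b * a)%C.
Definition phi (d : R) : R := ln ((1 + d) / (1 - d)).
Definition Tf (d : R) : R := (exp d - 1) / (exp d + 1).

Lemma hdist_pd a b : hdist a b = phi (pd a b).
Proof. reflexivity. Qed.

Lemma disk_sq a : in_disk a -> Cmod a ^ 2 < 1.
Proof. unfold in_disk. intros H. pose proof (Cmod_ge_0 a). nra. Qed.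

Lemma den_pos a b : in_disk a -> in_disk b -> 0 < Cmod (1 - Cconj b * a)%C.
Proof.
  intros Ha Hb. apply disk_sq in Ha. apply disk_sq in Hb.
  pose proof (D2 a b) as E. pose proof (Cmod_ge_0 (1 - Cconj b * a)%C) as P1.
  pose proof (Cmod_ge_0 (a - b)%C) as P2.
  assert (P3 : 0 < Cmod (1 - Cconj b * a)%C ^ 2) by nra.
  destruct (Rle_lt_or_eq_dec 0 _ P1) as [h|h]; auto. rewrite <- h in P3. nra.
Qed.

Lemma pd_ge0 a b : 0 <= pd a b.
Proof. unfold pd. destruct (Req_dec (Cmod (1 - Cconj b * a)%C) 0) as [h|h].
  rewrite h, Rdiv_0_r. lra.
  pose proof (Cmod_ge_0 (1 - Cconj b * a)%C). pose proof (Cmod_ge_0 (a - b)%C).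
  unfold Rdiv. apply Rmult_le_pos; auto. left. apply Rinv_0_lt_compat. lra. Qed.

Lemma pd_lt1 a b : in_disk a -> in_disk b -> pd a b < 1.
Proof.
  intros Ha Hb. pose proof (den_pos a b Ha Hb). unfold pd.
  apply Rlt_div_l; auto. rewrite Rmult_1_l.
  apply disk_sq in Ha. apply disk_sq in Hb.
  pose proof (D2 a b). pose proof (Cmod_ge_0 (a - b)%C).
  nra.
Qed.

Lemma pd_sym a b : pd a b = pd b a.
Proof. unfold pd, Cmod. destruct a as [a1 a2], b as [b1 b2]; simpl.
  f_equal; f_equal; ring. Qed.

Lemma pd_self a : pd a a = 0.
Proof. unfold pd. replace (a - a)%C with (RtoC 0) by ring. rewrite Cmod_0. unfold Rdiv. ring. Qed.

Lemma Cmod_ext x y : fst x ^ 2 + snd x ^ 2 = fst y ^ 2 + snd y ^ 2 -> Cmod x = Cmod y.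
Proof. unfold Cmod. intros ->. reflexivity. Qed.

Lemma pd_0r a : pd a 0 = Cmod a.
Proof. unfold pd. rewrite (Cmod_ext (1 - Cconj 0 * a)%C (RtoC 1)) by (destruct a; simpl; ring).
  rewrite (Cmod_ext (a - 0)%C a) by (destruct a; simpl; ring).
  rewrite Cmod_1. unfold Rdiv. rewrite Rinv_1, Rmult_1_r. reflexivity. Qed.

Lemma pd_0l a : pd 0 a = Cmod a.
Proof. rewrite pd_sym. apply pd_0r. Qed.

Lemma Tf_bounds d : -1 < Tf d < 1.
Proof. unfold Tf. pose proof (exp_pos d). split.
  apply Rlt_div_r; lra. apply Rlt_div_l; lra. Qed.

Lemma phi_Tf d : phi (Tf d) = d.
Proof. unfold phi, Tf. pose proof (exp_pos d).
  replace ((1 + (exp d - 1) / (exp d + 1)) / (1 - (exp d - 1) / (exp d + 1))) with (exp d)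
   by (field; lra). apply ln_exp. Qed.

Lemma Tf_phi x : -1 < x < 1 -> Tf (phi x) = x.
Proof. intros H. unfold Tf, phi. rewrite exp_ln.
  replace ((1 + x) / (1 - x) - 1) with (2 * x / (1 - x)) by (field; lra).
  replace ((1 + x) / (1 - x) + 1) with (2 / (1 - x)) by (field; lra).
  field. lra.
  apply Rdiv_lt_0_compat; lra. Qed.

Lemma phi_lt a b : -1 < a -> a < b -> b < 1 -> phi a < phi b.
Proof. intros. unfold phi. apply ln_increasing. apply Rdiv_lt_0_compat; lra.
  replace ((1 + a) / (1 - a)) with (-1 + 2 * / (1 - a)) by (field; lra).
  replace ((1 + b) / (1 - b)) with (-1 + 2 * / (1 - b)) by (field; lra).
  apply Rplus_lt_compat_l. apply Rmult_lt_compat_l; [lra|].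
  apply Rinv_lt_contravar; nra. Qed.

Lemma phi_le a b : -1 < a -> a <= b -> b < 1 -> phi a <= phi b.
Proof. intros. destruct H0. left; apply phi_lt; auto. subst; lra. Qed.

Lemma phi_lt_inv a b : -1 < a < 1 -> -1 < b < 1 -> phi a < phi b -> a < b.
Proof. intros. destruct (Rlt_or_le a b); auto. destruct H2.
  pose proof (phi_lt b a ltac:(lra) H2 ltac:(lra)); lra. subst; lra. Qed.

Lemma phi_le_inv a b : -1 < a < 1 -> -1 < b < 1 -> phi a <= phi b -> a <= b.
Proof. intros. destruct (Rle_or_lt a b); auto.
  pose proof (phi_lt b a ltac:(lra) H2 ltac:(lra)); lra. Qed.

Lemma Tf_lt a b : a < b -> Tf a < Tf b.
Proof. intros. pose proof (Tf_bounds a). pose proof (Tf_bounds b).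
  apply phi_lt_inv; try lra. rewrite !phi_Tf; auto. Qed.

Lemma Tf_le a b : a <= b -> Tf a <= Tf b.
Proof. intros [h|h]. left; apply Tf_lt; auto. subst; lra. Qed.

Lemma Tf_0 : Tf 0 = 0.
Proof. unfold Tf. rewrite exp_0. field. Qed.

Lemma Tf_minus u v : Tf (u - v) = (Tf u - Tf v) / (1 - Tf u * Tf v).
Proof. unfold Tf. assert (EE : exp (u - v) = exp u * / exp v) by
    (unfold Rminus; rewrite exp_plus, exp_Ropp; auto). rewrite EE.
  pose proof (exp_pos u) as Hu. pose proof (exp_pos v) as Hv.
  set (E := exp u) in *. set (F := exp v) in *.
  replace ((E - 1) / (E + 1) - (F - 1) / (F + 1)) with (2 * (E - F) / ((E + 1) * (F + 1))) by (field; lra).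
  replace (1 - (E - 1) / (E + 1) * ((F - 1) / (F + 1))) with (2 * (E + F) / ((E + 1) * (F + 1))) by (field; lra).
  field. repeat split; lra. Qed.

Lemma Tf_opp u : Tf (- u) = - Tf u.
Proof. replace (- u) with (0 - u) by ring. rewrite Tf_minus, Tf_0. field; pose proof (Tf_bounds u); lra. Qed.

Lemma Tf_plus u v : Tf (u + v) = (Tf u + Tf v) / (1 + Tf u * Tf v).
Proof. replace (u + v) with (u - - v) by ring. rewrite Tf_minus, Tf_opp.
  replace (Tf u - - Tf v) with (Tf u + Tf v) by ring.
  replace (Tf u * - Tf v) with (- (Tf u * Tf v)) by ring.
  unfold Rminus. rewrite Ropp_involutive. reflexivity. Qed.

Lemma Tf_ge0 u : 0 <= u -> 0 <= Tf u.
Proof. intros. rewrite <- Tf_0. apply Tf_le; auto. Qed.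

Lemma Tf_abs u : Tf (Rabs u) = Rabs (Tf u).
Proof. destruct (Rle_or_lt 0 u).
  rewrite !Rabs_pos_eq; auto. apply Tf_ge0; auto.
  rewrite Rabs_left by auto. rewrite Rabs_left. apply Tf_opp.
  rewrite <- Tf_0. apply Tf_lt; auto. Qed.

Lemma geod_pd f s t : is_geodesic f -> pd (f s) (f t) = Tf (Rabs (t - s)).
Proof. intros [Hd Hg]. specialize (Hg s t). rewrite hdist_pd in Hg. rewrite <- Hg.
  rewrite Tf_phi; auto. pose proof (pd_ge0 (f s) (f t)). pose proof (pd_lt1 _ _ (Hd s) (Hd t)). lra. Qed.

Lemma hdist_lt_iff a b d : in_disk a -> in_disk b -> (hdist a b < d <-> pd a b < Tf d).
Proof. intros Ha Hb. rewrite hdist_pd. pose proof (pd_ge0 a b). pose proof (pd_lt1 a b Ha Hb).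
  pose proof (Tf_bounds d). split; intros.
  apply phi_lt_inv; try lra. rewrite phi_Tf; auto.
  rewrite <- (phi_Tf d). apply phi_lt; lra. Qed.

Lemma hdist_le_iff a b c e : in_disk a -> in_disk b -> in_disk c -> in_disk e ->
  (hdist a b <= hdist c e <-> pd a b <= pd c e).
Proof. intros. rewrite !hdist_pd. pose proof (pd_ge0 a b). pose proof (pd_lt1 a b H H0).
  pose proof (pd_ge0 c e). pose proof (pd_lt1 c e H1 H2). split; intros.
  apply phi_le_inv; try lra; auto. apply phi_le; lra. Qed.

Definition den (g : C * C) (z : C) : C := (Cconj (snd g) * z + Cconj (fst g))%C.
Definition kap (g : C * C) : R := Cmod (fst g) ^ 2 - Cmod (snd g) ^ 2.

Lemma kc_eq g : (fst g * Cconj (fst g) - snd g * Cconj (snd g))%C = RtoC (kap g).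
Proof. unfold kap. rewrite !Cmod_sq. destruct g as [[a1 a2] [b1 b2]].
  apply injective_projections; simpl; ring. Qed.

Lemma den_nz g z : 0 < kap g -> in_disk z -> den g z <> RtoC 0.
Proof. intros Hk Hz E. unfold kap in Hk. unfold in_disk in Hz.
  assert (E2 : Cconj (fst g) = (den g z - Cconj (snd g) * z)%C) by (unfold den; ring).
  rewrite E in E2. replace (RtoC 0 - Cconj (snd g) * z)%C with (- (Cconj (snd g) * z))%C in E2 by ring.
  apply (f_equal Cmod) in E2. rewrite Cmod_conj, Cmod_opp, Cmod_mult, Cmod_conj in E2.
  pose proof (Cmod_ge_0 z). pose proof (Cmod_ge_0 (snd g)). pose proof (Cmod_ge_0 (fst g)).
  rewrite E2 in Hk. assert (Cmod z * Cmod z < 1) by nra.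
  assert (0 <= Cmod (snd g) * Cmod (snd g)) by nra. nra. Qed.

Lemma den_abs_sq g z : Cmod (den g z) ^ 2 - Cmod (fst g * z + snd g)%C ^ 2
  = kap g * (1 - Cmod z ^ 2).
Proof. unfold den, kap. rewrite !Cmod_sq. destruct g as [[a1 a2] [b1 b2]], z as [z1 z2].
  simpl. ring. Qed.

Lemma act_disk g z : 0 < kap g -> in_disk z -> in_disk (act g z).
Proof. intros Hk Hz. pose proof (den_nz g z Hk Hz) as Hd.
  unfold in_disk, act. rewrite Cmod_div by exact Hd. fold (den g z).
  pose proof (den_abs_sq g z). apply disk_sq in Hz.
  assert (0 < Cmod (den g z)) by (apply Cmod_gt_0; exact Hd).
  apply Rlt_div_l; auto. rewrite Rmult_1_l.
  pose proof (Cmod_ge_0 (fst g * z + snd g)%C). nra. Qed.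

Lemma act_diff g a b : den g a <> RtoC 0 -> den g b <> RtoC 0 ->
  (act g a - act g b)%C = (RtoC (kap g) * (a - b) / (den g a * den g b))%C.
Proof. intros Ha Hb. rewrite <- kc_eq. unfold act. fold (den g a). fold (den g b).
  unfold den in *. field. split; auto. Qed.

Lemma act_cdiff g a b : den g a <> RtoC 0 -> den g b <> RtoC 0 ->
  (1 - Cconj (act g b) * act g a)%C
  = (RtoC (kap g) * (1 - Cconj b * a) / (Cconj (den g b) * den g a))%C.
Proof. intros Ha Hb. rewrite <- kc_eq. unfold act. fold (den g a). fold (den g b).
  rewrite Cdiv_conj by exact Hb.
  assert (Hb' : Cconj (den g b) <> RtoC 0).
  { intro h. apply Hb. rewrite <- (Cconj_conj (den g b)), h. unfold Cconj, RtoC; simpl. f_equal; ring. }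
  revert Hb'. unfold den in *. intros Hb'.
  rewrite !Cplus_conj, !Cmult_conj, !Cconj_conj in *.
  field. split; auto. Qed.

Lemma Cmult_nz (x y : C) : x <> RtoC 0 -> y <> RtoC 0 -> (x * y)%C <> RtoC 0.
Proof. intros Hx Hy h. apply (f_equal Cmod) in h. rewrite Cmod_mult, Cmod_0 in h.
  apply Cmod_gt_0 in Hx. apply Cmod_gt_0 in Hy. nra. Qed.

Lemma Cconj_nz (x : C) : x <> RtoC 0 -> Cconj x <> RtoC 0.
Proof. intros Hx h. apply Hx. apply (f_equal Cmod) in h. rewrite Cmod_conj, Cmod_0 in h.
  apply Cmod_eq_0; auto. Qed.

Lemma pd_act g a b : 0 < kap g -> in_disk a -> in_disk b ->
  pd (act g a) (act g b) = pd a b.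
Proof. intros Hk Ha Hb. pose proof (den_nz g a Hk Ha) as Da. pose proof (den_nz g b Hk Hb) as Db.
  pose proof (den_pos a b Ha Hb) as P.
  unfold pd. rewrite act_diff, act_cdiff by auto.
  rewrite !Cmod_div by (apply Cmult_nz; auto; apply Cconj_nz; auto).
  rewrite !Cmod_mult, Cmod_conj, Cmod_R.
  apply Cmod_gt_0 in Da. apply Cmod_gt_0 in Db.
  rewrite Rabs_pos_eq by lra.
  field. repeat split; lra. Qed.

Lemma den_comp g h z : den h z <> RtoC 0 ->
  den (gmul g h) z = (den g (act h z) * den h z)%C.
Proof. intros Hh. unfold den, gmul, act. simpl. fold (den h z).
  rewrite !Cplus_conj, !Cmult_conj, !Cconj_conj.
  unfold den in *. field. auto. Qed.

Lemma act_comp g h z : den h z <> RtoC 0 -> den g (act h z) <> RtoC 0 ->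
  act (gmul g h) z = act g (act h z).
Proof. intros Hh Hg. pose proof (den_comp g h z Hh) as E.
  assert (Hgh : den (gmul g h) z <> RtoC 0) by (rewrite E; apply Cmult_nz; auto).
  clear E. destruct g as [a b], h as [c d].
  unfold act, den, gmul in *. simpl in *.
  rewrite !Cplus_conj, !Cmult_conj, !Cconj_conj in *.
  field. repeat split; auto.
  replace (Cconj b * (c * z + d) + Cconj a * (Cconj d * z + Cconj c))%C with
   ((Cconj a * Cconj d + Cconj b * c) * z + (Cconj a * Cconj c + Cconj b * d))%C by ring.
  auto. Qed.

Lemma kap_ginv h : kap (ginv h) = kap h.
Proof. unfold kap, ginv. simpl. rewrite Cmod_conj, Cmod_opp. reflexivity. Qed.

Lemma act_inv h z : kap h = 1 -> in_disk z -> act (ginv h) (act h z) = z.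
Proof. intros Hk Hz. pose proof (den_nz h z ltac:(lra) Hz) as D.
  pose proof (kc_eq h) as K. rewrite Hk in K.
  unfold act, ginv. simpl. fold (den h z). revert D. unfold den. intros D.
  rewrite Copp_conj, Cconj_conj.
  set (a := fst h) in *. set (b := snd h) in *.
  assert (E1 : (Cconj a * ((a * z + b) / (Cconj b * z + Cconj a)) + - b)%C
     = (z * (a * Cconj a - b * Cconj b) / (Cconj b * z + Cconj a))%C) by (field; auto).
  assert (E2 : (- Cconj b * ((a * z + b) / (Cconj b * z + Cconj a)) + a)%C
     = ((a * Cconj a - b * Cconj b) / (Cconj b * z + Cconj a))%C) by (field; auto).
  rewrite E1, E2, K. field. repeat split; auto.
  Qed.

Lemma pd_tri0 a c : in_disk a -> in_disk c ->
  pd a c <= (Cmod a + Cmod c) / (1 + Cmod a * Cmod c).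
Proof. intros Ha Hc. pose proof (den_pos a c Ha Hc) as P. unfold pd.
  pose proof (D2 a c) as E.
  assert (T : Cmod (1 - Cconj c * a)%C <= 1 + Cmod a * Cmod c).
  { unfold Cminus. eapply Rle_trans. apply Cmod_triangle. rewrite Cmod_1, Cmod_opp, Cmod_mult, Cmod_conj. lra. }
  unfold in_disk in *. pose proof (Cmod_ge_0 a). pose proof (Cmod_ge_0 c).
  pose proof (Cmod_ge_0 (a - c)%C).
  set (D := Cmod (1 - Cconj c * a)%C) in *. set (N := Cmod (a - c)%C) in *.
  set (x := Cmod a) in *. set (y := Cmod c) in *.
  apply Rle_trans with ((x + y) * D / (1 + x * y) / D).
  2:{ right. field. split; nra. }
  unfold Rdiv at 1. apply Rmult_le_compat_r. left; apply Rinv_0_lt_compat; auto.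
  apply Rle_div_r. nra.
  assert (W : 0 <= (1 - x ^ 2) * (1 - y ^ 2)) by (apply Rmult_le_pos; nra).
  assert (Sq : (N * (1 + x * y)) ^ 2 <= ((x + y) * D) ^ 2).
  { assert (N ^ 2 = D ^ 2 - (1 - x ^ 2) * (1 - y ^ 2)) by lra.
    assert (D ^ 2 <= (1 + x * y) ^ 2) by nra.
    replace ((N * (1 + x * y)) ^ 2) with (N ^ 2 * (1 + x * y) ^ 2) by ring.
    rewrite H2.
    assert ((1 + x * y) ^ 2 - (x + y) ^ 2 = (1 - x ^ 2) * (1 - y ^ 2)) by ring.
    nra. }
  assert (0 <= (x + y) * D) by nra.
  assert (0 <= N * (1 + x * y)) by nra.
  apply Rsqr_incr_0_var. unfold Rsqr. nra. auto. Qed.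

Definition Mb (b : C) : C * C := (RtoC 1, b).

Lemma kap_Mb b : kap (Mb b) = 1 - Cmod b ^ 2.
Proof. unfold kap, Mb. simpl. rewrite Cmod_1. ring. Qed.

Lemma kap_Mb_pos b : in_disk b -> 0 < kap (Mb b).
Proof. intros. rewrite kap_Mb. apply disk_sq in H. lra. Qed.

Lemma in_disk_opp b : in_disk b -> in_disk (- b)%C.
Proof. unfold in_disk. rewrite Cmod_opp. auto. Qed.

Lemma act_Mb_self b : in_disk b -> act (Mb (- b)%C) b = RtoC 0.
Proof. intros. unfold act, Mb. simpl.
  replace (RtoC 1 * b + - b)%C with (RtoC 0) by ring.
  unfold Cdiv. ring. Qed.

Lemma pd_tri a b c : in_disk a -> in_disk b -> in_disk c ->
  pd a c <= (pd a b + pd b c) / (1 + pd a b * pd b c).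
Proof. intros Ha Hb Hc.
  pose proof (kap_Mb_pos _ (in_disk_opp b Hb)) as K.
  rewrite <- (pd_act _ a c K Ha Hc), <- (pd_act _ a b K Ha Hb), <- (pd_act _ b c K Hb Hc).
  rewrite act_Mb_self by auto. rewrite pd_0r, pd_0l.
  apply pd_tri0; apply act_disk; auto. Qed.

Lemma pd_tri2 a b c q : in_disk a -> in_disk b -> in_disk c ->
  pd b a <= q -> pd b c <= q -> q < 1 -> pd a c <= 2 * q / (1 + q ^ 2).
Proof. intros Ha Hb Hc H1 H2 Hq. rewrite pd_sym in H1.
  pose proof (pd_tri a b c Ha Hb Hc). pose proof (pd_ge0 a b). pose proof (pd_ge0 b c).
  eapply Rle_trans. apply H.
  set (u := pd a b) in *. set (v := pd b c) in *.
  apply Rle_div_l. nra.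
  apply Rle_trans with (2 * q * (1 + u * v) / (1 + q ^ 2)).
  2:{ right. field. nra. }
  apply Rle_div_r. nra.
  assert (0 <= (q - u) * (1 - q * v)) by (apply Rmult_le_pos; nra).
  assert (0 <= (q - v) * (1 - q * u)) by (apply Rmult_le_pos; nra).
  nra. Qed.

Lemma eq_case_core a1 a2 c1 c2 x y s :
  x ^ 2 = a1 ^ 2 + a2 ^ 2 -> y ^ 2 = c1 ^ 2 + c2 ^ 2 -> 0 <= x < 1 -> 0 < y < 1 ->
  (s = 1 \/ s = -1) ->
  ((a1 - c1) ^ 2 + (a2 - c2) ^ 2) * (1 - s * x * y) ^ 2 =
  (x - s * y) ^ 2 * ((1 - (c1 * a1 + c2 * a2)) ^ 2 + (c1 * a2 - c2 * a1) ^ 2) ->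
  y * a1 = s * x * c1 /\ y * a2 = s * x * c2.
Proof. intros Hx Hy Bx By Hs E.
  set (P := a1 * c1 + a2 * c2).
  assert (N2 : (a1 - c1) ^ 2 + (a2 - c2) ^ 2 = x ^ 2 + y ^ 2 - 2 * P) by (unfold P; nra).
  assert (D2' : (1 - (c1 * a1 + c2 * a2)) ^ 2 + (c1 * a2 - c2 * a1) ^ 2 = 1 + x ^ 2 * y ^ 2 - 2 * P).
  { unfold P. replace (x ^ 2 * y ^ 2) with ((a1 ^ 2 + a2 ^ 2) * (c1 ^ 2 + c2 ^ 2)) by (rewrite Hx, Hy; ring). ring. }
  rewrite N2, D2' in E.
  assert (S2 : s ^ 2 = 1) by (destruct Hs; subst; ring).
  assert (W : 0 < (1 - x ^ 2) * (1 - y ^ 2)) by (apply Rmult_lt_0_compat; nra).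
  assert (EP : (1 - x ^ 2) * (1 - y ^ 2) * (s * x * y - P) = 0).
  { assert (Id : (x ^ 2 + y ^ 2 - 2 * P) * (1 - s * x * y) ^ 2 - (x - s * y) ^ 2 * (1 + x ^ 2 * y ^ 2 - 2 * P)
       = 2 * ((1 - x ^ 2) * (1 - y ^ 2) * (s * x * y - P))) by (destruct Hs; subst s; ring).
    lra. }
  assert (HP : P = s * x * y).
  { apply Rmult_integral in EP. destruct EP; lra. }
  assert (Z : (y * a1 - s * x * c1) ^ 2 + (y * a2 - s * x * c2) ^ 2 = 0).
  { replace ((y * a1 - s * x * c1) ^ 2 + (y * a2 - s * x * c2) ^ 2) with
      (y ^ 2 * (a1 ^ 2 + a2 ^ 2) + s ^ 2 * x ^ 2 * (c1 ^ 2 + c2 ^ 2) - 2 * s * x * y * P) by (unfold P; ring).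
    rewrite <- Hx, <- Hy, HP, S2. ring_simplify. replace (s ^ 2) with 1 by lra. ring. }
  pose proof (pow2_ge_0 (y * a1 - s * x * c1)). pose proof (pow2_ge_0 (y * a2 - s * x * c2)).
  assert (Z1 : (y * a1 - s * x * c1) ^ 2 = 0) by lra.
  assert (Z2 : (y * a2 - s * x * c2) ^ 2 = 0) by lra.
  rewrite <- Rsqr_pow2 in Z1, Z2. apply Rsqr_eq_0 in Z1. apply Rsqr_eq_0 in Z2. split; lra. Qed.

Lemma eq_case a c s : in_disk a -> in_disk c -> 0 < Cmod c -> (s = 1 \/ s = -1) ->
  pd a c ^ 2 * (1 - s * Cmod a * Cmod c) ^ 2 = (Cmod a - s * Cmod c) ^ 2 ->
  a = (RtoC (s * Cmod a / Cmod c) * c)%C.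
Proof. intros Ha Hc Pc Hs E.
  pose proof (den_pos a c Ha Hc) as P.
  assert (E2 : Cmod (a - c)%C ^ 2 * (1 - s * Cmod a * Cmod c) ^ 2 =
     (Cmod a - s * Cmod c) ^ 2 * Cmod (1 - Cconj c * a)%C ^ 2).
  { rewrite <- E. unfold pd. field. lra. }
  pose proof (Cmod_sq a) as Sa. pose proof (Cmod_sq c) as Sc.
  pose proof (Cmod_ge_0 a). unfold in_disk in *.
  rewrite !Cmod_sq in E2.
  destruct a as [a1 a2], c as [c1 c2]. cbn [fst snd Cminus Cplus Copp Cmult Cconj RtoC] in Sa, Sc, E2.
  destruct (eq_case_core a1 a2 c1 c2 (Cmod (a1, a2)) (Cmod (c1, c2)) s) as [e1 e2]; auto; try lra.
  set (x := Cmod (a1, a2)) in *. set (y := Cmod (c1, c2)) in *.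
  assert (A1 : a1 = s * x / y * c1).
  { apply Rmult_eq_reg_l with y; [|lra]. rewrite e1. field. lra. }
  assert (A2 : a2 = s * x / y * c2).
  { apply Rmult_eq_reg_l with y; [|lra]. rewrite e2. field. lra. }
  unfold RtoC. apply injective_projections; simpl.
  - rewrite A1 at 1. ring.
  - rewrite A2 at 1. ring.
Qed.

Definition K (z e : C) (u : R) : C := act (Mb z) (RtoC (Tf u) * e)%C.

Lemma unit_sq e : Cmod e = 1 -> fst e ^ 2 + snd e ^ 2 = 1.
Proof. intros H. rewrite <- Cmod_sq, H. ring. Qed.

Lemma Tfe_disk u e : Cmod e = 1 -> in_disk (RtoC (Tf u) * e)%C.
Proof. intros H. unfold in_disk. rewrite Cmod_mult, Cmod_R, H.
  pose proof (Tf_bounds u). rewrite Rmult_1_r. apply Rabs_def1; lra. Qed.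

Lemma pd_line s t e : Cmod e = 1 ->
  pd (RtoC (Tf s) * e)%C (RtoC (Tf t) * e)%C = Tf (Rabs (t - s)).
Proof. intros H. pose proof (unit_sq e H) as U. unfold pd.
  rewrite (Cmod_ext _ (RtoC (Tf s - Tf t))).
  2:{ destruct e as [e1 e2]; cbn [fst snd Cminus Cplus Copp Cmult Cconj RtoC] in *.
      transitivity ((Tf s - Tf t) ^ 2 * (e1 ^ 2 + e2 ^ 2)); [ring| rewrite U; ring]. }
  rewrite (Cmod_ext (1 - Cconj (RtoC (Tf t) * e) * (RtoC (Tf s) * e))%C (RtoC (1 - Tf s * Tf t))).
  2:{ destruct e as [e1 e2]; cbn [fst snd Cminus Cplus Copp Cmult Cconj RtoC] in *.
      transitivity ((1 - Tf s * Tf t * (e1 ^ 2 + e2 ^ 2)) ^ 2); [ring| rewrite U; ring]. }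
  rewrite !Cmod_R. pose proof (Tf_bounds s). pose proof (Tf_bounds t).
  rewrite (Rabs_pos_eq (1 - Tf s * Tf t)) by nra.
  replace (t - s) with (- (s - t)) by ring. rewrite Rabs_Ropp, Tf_abs, Tf_minus.
  unfold Rdiv. rewrite Rabs_mult, Rabs_inv, (Rabs_pos_eq (1 - Tf s * Tf t)) by nra. reflexivity.
Qed.

Lemma K_disk z e u : in_disk z -> Cmod e = 1 -> in_disk (K z e u).
Proof. intros. unfold K. apply act_disk. apply kap_Mb_pos; auto. apply Tfe_disk; auto. Qed.

Lemma K_pd z e s t : in_disk z -> Cmod e = 1 -> pd (K z e s) (K z e t) = Tf (Rabs (t - s)).
Proof. intros. unfold K. rewrite pd_act. apply pd_line; auto.
  apply kap_Mb_pos; auto. apply Tfe_disk; auto. apply Tfe_disk; auto. Qed.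

Lemma K_geod z e : in_disk z -> Cmod e = 1 -> is_geodesic (K z e).
Proof. intros. split. intros; apply K_disk; auto.
  intros s t. rewrite hdist_pd, K_pd by auto. apply phi_Tf. Qed.

Lemma Cconj_1 : Cconj (RtoC 1) = RtoC 1.
Proof. unfold Cconj, RtoC. simpl. f_equal. ring. Qed.

Lemma Mb_inv z w : in_disk z -> in_disk w -> act (Mb z) (act (Mb (- z)%C) w) = w.
Proof. intros Hz Hw.
  pose proof (den_nz (Mb (- z)%C) w (kap_Mb_pos _ (in_disk_opp z Hz)) Hw) as D1.
  pose proof (den_nz (Mb z) (act (Mb (- z)%C) w) (kap_Mb_pos _ Hz)
     (act_disk _ _ (kap_Mb_pos _ (in_disk_opp z Hz)) Hw)) as D2.
  assert (D3 : (RtoC 1 - Cconj z * z)%C <> RtoC 0).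
  { intro h. apply (f_equal fst) in h. apply disk_sq in Hz. rewrite Cmod_sq in Hz.
    destruct z as [z1 z2]. simpl in h. simpl in Hz. ring_simplify in h. ring_simplify in Hz. lra. }
  revert D1 D2. unfold act, den, Mb. cbn [fst snd]. rewrite Copp_conj, Cconj_1.
  intros D1 D2. field. repeat split; auto.
  replace (Cconj z * (w + - z) + (- Cconj z * w + 1))%C with (1 - Cconj z * z)%C by ring. auto. Qed.

Lemma geod_rep f : is_geodesic f ->
  exists e, Cmod e = 1 /\ forall u, f u = K (f 0) e u.
Proof. intros Hf. pose proof Hf as [Hd _].
  set (z := f 0).
  assert (Kz : 0 < kap (Mb (- z)%C)) by (apply kap_Mb_pos, in_disk_opp, Hd).
  set (p := fun u => act (Mb (- z)%C) (f u)).
  assert (Pd : forall u v, pd (p u) (p v) = Tf (Rabs (v - u))).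
  { intros. unfold p. rewrite pd_act by auto. apply geod_pd; auto. }
  assert (P0 : p 0 = RtoC 0) by (unfold p; apply act_Mb_self; apply Hd).
  assert (PD : forall u, in_disk (p u)) by (intros; apply act_disk; auto).
  assert (Mp : forall u, Cmod (p u) = Tf (Rabs u)).
  { intros. rewrite <- pd_0r, <- P0, Pd. replace (0 - u) with (- u) by ring. rewrite Rabs_Ropp. reflexivity. }
  set (g := Tf 1).
  assert (Gp : 0 < g) by (unfold g; rewrite <- Tf_0; apply Tf_lt; lra).
  assert (Gl : g < 1) by (apply Tf_bounds).
  assert (Mp1 : Cmod (p 1) = g) by (rewrite Mp, Rabs_pos_eq by lra; reflexivity).
  exists (RtoC (/ g) * p 1)%C. split.
  { rewrite Cmod_mult, Cmod_R, Mp1, Rabs_pos_eq. field. lra. left. apply Rinv_0_lt_compat; lra. }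
  assert (Pu : forall u, p u = (RtoC (Tf u) * (RtoC (/ g) * p 1))%C).
  { intros u.
    assert (E : exists s, (s = 1 \/ s = -1) /\ s * Cmod (p u) = Tf u /\
       pd (p u) (p 1) ^ 2 * (1 - s * Cmod (p u) * Cmod (p 1)) ^ 2 = (Cmod (p u) - s * Cmod (p 1)) ^ 2).
    { rewrite Pd, Mp, Mp1. pose proof (Tf_bounds u) as Bu.
      destruct (Rle_or_lt 0 u) as [Hu|Hu].
      - exists 1. rewrite (Rabs_pos_eq u) by lra. split; [auto|split; [ring|]].
        rewrite Tf_abs, pow2_abs, Tf_minus. fold g. field.
        assert (g * Tf u < 1) by nra.
        lra.
      - exists (-1). rewrite (Rabs_left u) by lra. rewrite Tf_opp. split; [auto|split; [ring|]].
        rewrite (Rabs_pos_eq (1 - u)) by lra.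
        replace (1 - u) with (1 + - u) by ring. rewrite Tf_plus, Tf_opp. fold g.
        assert (Tf u < 0) by (rewrite <- Tf_0; apply Tf_lt; lra).
        field. nra. }
    destruct E as [s [Hs [Hsu E]]].
    rewrite (eq_case (p u) (p 1) s (PD u) (PD 1%R) ltac:(rewrite Mp1; lra) Hs E).
    rewrite Mp1, Hsu. generalize (p 1%R). intros [c1 c2]. apply injective_projections; simpl; field; lra. }
  intros u. rewrite <- (Mb_inv z (f u)) by apply Hd. fold (p u). rewrite Pu. reflexivity.
Qed.

Section Cont.
Context {U : UniformSpace}.
Lemma rc_plus (f g : U -> R) x : continuous f x -> continuous g x -> continuous (fun u => f u + g u) x.
Proof. intros. apply (continuous_plus f g); auto. Qed.
Lemma rc_mult (f g : U -> R) x : continuous f x -> continuous g x -> continuous (fun u => f u * g u) x.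
Proof. intros. apply (continuous_mult f g); auto. Qed.
Lemma rc_opp (f : U -> R) x : continuous f x -> continuous (fun u => - f u) x.
Proof. intros. apply (continuous_opp f); auto. Qed.
Lemma rc_const (c : R) x : continuous (fun _ : U => c) x.
Proof. apply continuous_const. Qed.
Lemma rc_inv (f : U -> R) x : continuous f x -> f x <> 0 -> continuous (fun u => / f u) x.
Proof. intros. apply (continuous_comp f Rinv). auto. apply continuous_Rinv; auto. Qed.
Lemma rc_sqrt (f : U -> R) x : continuous f x -> continuous (fun u => sqrt (f u)) x.
Proof. intros. apply (continuous_comp f sqrt). auto. apply continuous_sqrt. Qed.
Lemma rc_comp (f : U -> R) (h : R -> R) x : continuous f x -> continuous h (f x) -> continuous (fun u => h (f u)) x.
Proof. intros. apply (continuous_comp f h); auto. Qed.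
Lemma rc_minus (f g : U -> R) x : continuous f x -> continuous g x -> continuous (fun u => f u - g u) x.
Proof. intros. apply rc_plus; auto. apply rc_opp; auto. Qed.

Definition ccont (F : U -> C) x :=
  continuous (fun u => fst (F u)) x /\ continuous (fun u => snd (F u)) x.

Lemma cc_const (c : C) x : ccont (fun _ => c) x.
Proof. split; apply rc_const. Qed.
Lemma cc_RtoC (f : U -> R) x : continuous f x -> ccont (fun u => RtoC (f u)) x.
Proof. intros. split; simpl; auto. apply rc_const. Qed.
Lemma cc_plus F H x : ccont F x -> ccont H x -> ccont (fun u => F u + H u)%C x.
Proof. intros [] []. split; simpl; apply rc_plus; auto. Qed.
Lemma cc_opp F x : ccont F x -> ccont (fun u => - F u)%C x.
Proof. intros []. split; simpl; apply rc_opp; auto. Qed.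
Lemma cc_minus F H x : ccont F x -> ccont H x -> ccont (fun u => F u - H u)%C x.
Proof. intros. apply cc_plus; auto. apply cc_opp; auto. Qed.
Lemma cc_mult F H x : ccont F x -> ccont H x -> ccont (fun u => F u * H u)%C x.
Proof. intros [] []. split; simpl.
  apply rc_minus; apply rc_mult; auto. apply rc_plus; apply rc_mult; auto. Qed.
Lemma cc_conj F x : ccont F x -> ccont (fun u => Cconj (F u)) x.
Proof. intros []. split; simpl; auto. apply rc_opp; auto. Qed.
Lemma cc_inv F x : ccont F x -> F x <> RtoC 0 -> ccont (fun u => / F u)%C x.
Proof. intros [H1 H2] Hn.
  assert (Q : fst (F x) ^ 2 + snd (F x) ^ 2 <> 0).
  { intro h. apply Hn. apply Cmod_eq_0. unfold Cmod. rewrite h. apply sqrt_0. }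
  assert (C2 : continuous (fun u => / (fst (F u) ^ 2 + snd (F u) ^ 2)) x).
  { apply rc_inv; auto. simpl. apply rc_plus; apply rc_mult; auto; apply rc_mult; auto; apply rc_const. }
  split; simpl; unfold Rdiv. apply rc_mult; auto. apply rc_mult; auto. apply rc_opp; auto. Qed.
Lemma cc_div F H x : ccont F x -> ccont H x -> H x <> RtoC 0 -> ccont (fun u => F u / H u)%C x.
Proof. intros. unfold Cdiv. apply cc_mult; auto. apply cc_inv; auto. Qed.
Lemma rc_Cmod F x : ccont F x -> continuous (fun u => Cmod (F u)) x.
Proof. intros [H1 H2]. unfold Cmod. apply rc_sqrt. apply rc_plus; simpl; apply rc_mult; auto; apply rc_mult; auto; apply rc_const. Qed.

Lemma rc_pd F w x : ccont F x -> in_disk (F x) -> in_disk w ->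
  continuous (fun u => pd (F u) w) x.
Proof. intros HF H1 H2. unfold pd, Rdiv. apply rc_mult.
  apply rc_Cmod. apply cc_minus; auto. apply cc_const.
  apply rc_inv. apply rc_Cmod. apply cc_minus. apply cc_const. apply cc_mult; auto. apply cc_const.
  pose proof (den_pos _ _ H1 H2). lra. Qed.

Lemma cc_act g F x : ccont F x -> den g (F x) <> RtoC 0 -> ccont (fun u => act g (F u)) x.
Proof. intros HF Hd. unfold act. apply cc_div.
  apply cc_plus. apply cc_mult; auto. apply cc_const. apply cc_const.
  apply cc_plus. apply cc_mult; auto. apply cc_const. apply cc_const. exact Hd. Qed.
End Cont.

Lemma cc_actMb {U : UniformSpace} (Z W : U -> C) x : ccont Z x -> ccont W x ->
  den (Mb (Z x)) (W x) <> RtoC 0 -> ccont (fun u => act (Mb (Z u)) (W u)) x.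
Proof. intros HZ HW Hd. unfold act, Mb. cbn [fst snd]. apply cc_div.
  apply cc_plus; auto. apply cc_mult; auto. apply cc_const.
  apply cc_plus. apply cc_mult; auto. apply cc_conj; auto. apply cc_const. exact Hd. Qed.

Definition Zp (y : R * (R * R)) : C := (fst y * cos (fst (snd y)), fst y * sin (fst (snd y))).
Definition Ep (y : R * (R * R)) : C := (cos (snd (snd y)), sin (snd (snd y))).

Lemma ccont_Zp y : ccont Zp y.
Proof. unfold Zp. split; cbn [fst snd]; apply rc_mult.
  1,3: apply continuous_fst.
  all: apply (rc_comp (fun y : R * (R * R) => fst (snd y))); [apply (continuous_comp snd fst); [apply continuous_snd|apply continuous_fst]|].
  apply continuous_cos. apply continuous_sin. Qed.

Lemma ccont_Ep y : ccont Ep y.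
Proof. unfold Ep. split; cbn [fst snd].
  all: apply (rc_comp (fun y : R * (R * R) => snd (snd y))); [apply (continuous_comp snd snd); apply continuous_snd|].
  apply continuous_cos. apply continuous_sin. Qed.

Lemma Cmod_Zp y : Cmod (Zp y) = Rabs (fst y).
Proof. rewrite <- Cmod_R. apply Cmod_ext. unfold Zp, RtoC; cbn [fst snd].
  transitivity (fst y ^ 2 * (Rsqr (sin (fst (snd y))) + Rsqr (cos (fst (snd y))))).
  unfold Rsqr; ring. rewrite sin2_cos2. ring. Qed.

Lemma Cmod_Ep y : Cmod (Ep y) = 1.
Proof. rewrite <- Cmod_1. apply Cmod_ext. unfold Ep, RtoC; cbn [fst snd].
  transitivity (Rsqr (sin (snd (snd y))) + Rsqr (cos (snd (snd y)))).
  unfold Rsqr; ring. rewrite sin2_cos2. ring. Qed.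

Lemma cont_Kp t w y : Rabs (fst y) < 1 -> in_disk w ->
  continuous (fun y => pd (K (Zp y) (Ep y) t) w) y.
Proof. intros Hy Hw. unfold K.
  assert (Zd : in_disk (Zp y)) by (unfold in_disk; rewrite Cmod_Zp; auto).
  apply rc_pd; auto.
  apply cc_actMb. apply ccont_Zp. apply cc_mult. apply cc_const. apply ccont_Ep.
  apply den_nz. apply kap_Mb_pos; auto. apply Tfe_disk, Cmod_Ep.
  fold (K (Zp y) (Ep y) t). apply K_disk; auto. apply Cmod_Ep. Qed.

Lemma cont_eps (F : R * (R * R) -> R) y0 : continuous F y0 ->
  forall eps, 0 < eps -> exists d, 0 < d /\ forall y, Rabs (fst y - fst y0) < d ->
    Rabs (fst (snd y) - fst (snd y0)) < d -> Rabs (snd (snd y) - snd (snd y0)) < d ->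
    Rabs (F y - F y0) < eps.
Proof. intros HF eps He. apply filterlim_locally with (eps := mkposreal eps He) in HF.
  destruct HF as [d Hd]. exists d. split. apply cond_pos.
  intros [a [b c]] H1 H2 H3. apply (Hd (a, (b, c))). simpl in *.
  split. exact H1. split. exact H2. exact H3. Qed.

Lemma angle_ex u v : u ^ 2 + v ^ 2 = 1 -> exists th, 0 <= th <= 2 * PI /\ cos th = u /\ sin th = v.
Proof. intros H. assert (Bu : -1 <= u <= 1) by nra.
  pose proof (acos_bound u) as Ba.
  assert (Sv : sqrt (1 - u²) = Rabs v).
  { rewrite <- sqrt_Rsqr_abs. f_equal. unfold Rsqr. nra. }
  destruct (Rle_or_lt 0 v).
  - exists (acos u). split. pose proof PI_RGT_0. lra. rewrite cos_acos, sin_acos by auto.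
    rewrite Sv, Rabs_pos_eq; auto.
  - exists (2 * PI - acos u). split. pose proof PI_RGT_0. lra.
    rewrite cos_minus, sin_minus, cos_2PI, sin_2PI, cos_acos, sin_acos, Sv, Rabs_left by auto. split; ring.
Qed.

Lemma polar_z z r : Cmod z <= r -> exists rh ph, 0 <= rh <= r /\ 0 <= ph <= 2 * PI /\
  forall th, Zp (rh, (ph, th)) = z.
Proof. intros Hz. pose proof (Cmod_ge_0 z) as Hp. destruct (Req_dec (Cmod z) 0) as [h|h].
  - apply Cmod_eq_0 in h. subst z. exists 0, 0. split. lra. split. pose proof PI_RGT_0; lra.
    intros. unfold Zp, RtoC; cbn [fst snd]. apply injective_projections; simpl; ring.
  - set (rh := Cmod z) in *. assert (0 < rh) by lra.
    destruct (angle_ex (fst z / rh) (snd z / rh)) as [ph [Bp [Hc Hs]]].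
    { assert (E : rh ^ 2 = fst z ^ 2 + snd z ^ 2) by apply Cmod_sq. field_simplify; try lra.
      rewrite <- E. field. lra. }
    exists rh, ph. split. lra. split. auto. intros th. unfold Zp; cbn [fst snd].
    rewrite Hc, Hs. destruct z as [z1 z2]. cbn [fst snd]. apply injective_projections; simpl; field; lra.
Qed.

Lemma polar_e e : Cmod e = 1 -> exists th, 0 <= th <= 2 * PI /\ forall rh ph, Ep (rh, (ph, th)) = e.
Proof. intros He. destruct (angle_ex (fst e) (snd e)) as [th [B [Hc Hs]]].
  rewrite <- Cmod_sq, He. ring. exists th. split; auto. intros. unfold Ep; cbn [fst snd].
  rewrite Hc, Hs. destruct e; reflexivity. Qed.

Definition nt (y : Compactness.Tn 3 R) : R * (R * R) := (fst y, (fst (snd y), fst (snd (snd y)))).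

Lemma claimU (G : C * C -> Prop) x rho r :
  (forall g, G g -> kap g = 1) -> in_disk x -> 0 <= r < 1 ->
  (forall k, is_geodesic k -> exists t g, G g /\ hdist (k t) (act g x) < rho) ->
  exists T, 0 <= T /\ forall f, is_geodesic f -> Cmod (f 0) <= r ->
    exists t g, Rabs t <= T /\ G g /\ pd (f t) (act g x) < Tf rho.
Proof. intros HG Hx Hr Hyp. set (c := Tf rho).
  set (a := (0, (0, (0, tt))) : Compactness.Tn 3 R).
  set (b := (r, (2 * PI, (2 * PI, tt))) : Compactness.Tn 3 R).
  assert (Loc : forall y : Compactness.Tn 3 R, exists d : posreal, bounded_n 3 a b y ->
     exists t g, G g /\ Rabs t <= / d /\ forall y', close_n 3 d y' y ->
        pd (K (Zp (nt y')) (Ep (nt y')) t) (act g x) < c).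
  { intros y. destruct (classic (bounded_n 3 a b y)) as [Hb|Hb].
    2:{ exists (mkposreal 1 Rlt_0_1). intros; contradiction. }
    destruct y as [y1 [y2 [y3 []]]]. simpl in Hb. destruct Hb as [B1 [B2 [B3 _]]].
    set (y := (y1, (y2, y3))).
    assert (Zd : in_disk (Zp y)) by (unfold in_disk; rewrite Cmod_Zp; simpl; rewrite Rabs_pos_eq; lra).
    destruct (Hyp _ (K_geod (Zp y) (Ep y) Zd (Cmod_Ep y))) as [t [g [Gg Ht]]].
    assert (Gd : in_disk (act g x)) by (apply act_disk; auto; rewrite HG; auto; lra).
    apply hdist_lt_iff in Ht; auto. 2:{ apply K_disk; auto. apply Cmod_Ep. }
    fold c in Ht.
    set (F := fun y => pd (K (Zp y) (Ep y) t) (act g x)).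
    assert (CF : continuous F y).
    { apply cont_Kp; auto. simpl. rewrite Rabs_pos_eq; lra. }
    destruct (cont_eps F y CF (c - F y) ltac:(unfold F; lra)) as [d0 [Hd0 Hd0']].
    assert (Pd : 0 < Rmin d0 (/ (1 + Rabs t))).
    { apply Rmin_glb_lt; auto. apply Rinv_0_lt_compat. pose proof (Rabs_pos t); lra. }
    exists (mkposreal _ Pd). intros _. exists t, g. split; auto. split.
    - simpl. apply Rle_trans with (/ / (1 + Rabs t)).
      rewrite Rinv_inv. lra.
      apply Rinv_le_contravar; auto. apply Rmin_r.
    - intros [z1 [z2 [z3 []]]] [H1 [H2 [H3 _]]]. simpl in H1, H2, H3.
      assert (Hz := Hd0' (z1, (z2, z3))). simpl in Hz.
      unfold nt; simpl. fold (F (z1, (z2, z3))).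
      assert (Rabs (F (z1, (z2, z3)) - F y) < c - F y).
      { apply Hz; eapply Rlt_le_trans; eauto; apply Rmin_l. }
      apply Rabs_def2 in H. lra. }
  destruct (functional_choice _ Loc) as [delta Hdelta].
  destruct (compactness_value 3 a b delta) as [d Hd].
  exists (/ d). split. left. apply Rinv_0_lt_compat, cond_pos.
  intros f Hf Hf0.
  destruct (geod_rep f Hf) as [e [He Hfe]].
  destruct (polar_z (f 0) r Hf0) as [rh [ph [Brh [Bph Hz]]]].
  destruct (polar_e e He) as [th [Bth Hee]].
  set (y := (rh, (ph, (th, tt))) : Compactness.Tn 3 R).
  assert (Hb : bounded_n 3 a b y) by (simpl; repeat split; lra).
  pose proof (Hd y Hb) as Hn. apply NNPP. intro Hno. apply Hn. intros [t0 [Hb0 [Hc0 Hd0]]].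
  apply Hno. destruct (Hdelta t0 Hb0) as [t [g [Gg [Ht Hp]]]].
  exists t, g. split; [|split; auto].
  - eapply Rle_trans. apply Ht. apply Rinv_le_contravar; auto. apply cond_pos.
  - rewrite Hfe. specialize (Hp y Hc0). unfold nt in Hp. simpl in Hp.
    rewrite Hz, Hee in Hp. exact Hp.
Qed.

Lemma ccont_of_derive (l : R -> C) t : ex_derive l t -> ccont l t.
Proof. intros H. apply ex_derive_continuous in H. split.
  apply (continuous_comp l fst); auto. apply continuous_fst.
  apply (continuous_comp l snd); auto. apply continuous_snd. Qed.

Lemma bnd_lt1 q : 0 <= q < 1 -> 0 <= 2 * q / (1 + q ^ 2) < 1.
Proof. intros. split. apply Rdiv_le_0_compat; nra. apply Rlt_div_l; nra. Qed.

Lemma phi_0 : phi 0 = 0.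
Proof. unfold phi. replace ((1 + 0) / (1 - 0)) with 1 by field. apply ln_1. Qed.

Lemma foot_ex l y t' q : is_geodesic l -> (forall t, ex_derive l t) -> in_disk y ->
  pd y (l t') <= q -> 0 <= q < 1 ->
  exists s, is_foot l y s /\ pd y (l s) <= pd y (l t') /\
    Rabs (s - t') <= phi (2 * q / (1 + q ^ 2)).
Proof. intros Hl Hder Hy Hq Bq. pose proof Hl as [Hd _].
  set (M := phi (2 * q / (1 + q ^ 2))).
  pose proof (bnd_lt1 q Bq) as Bb.
  assert (M0 : 0 <= M) by (unfold M; rewrite <- phi_0; apply phi_le; lra).
  set (F := fun u => pd (l u) y).
  assert (CF : forall u, continuous F u).
  { intros u. apply rc_pd; auto. apply ccont_of_derive; auto. }
  destruct (continuous_ab_min_consistent F (t' - M) (t' + M)) as [s [Hs Bs]].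
  lra. intros; apply CF.
  assert (Hmin : forall u, F s <= F u).
  { intros u. destruct (Rle_or_lt (F s) (F u)) as [h|h]; auto. exfalso.
    assert (Ht' : F s <= F t') by (apply Hs; lra).
    unfold F in h, Ht'. rewrite pd_sym in Hq.
    assert (P : pd (l u) (l t') <= 2 * q / (1 + q ^ 2)).
    { apply (pd_tri2 (l u) y (l t') q); auto; try lra. rewrite pd_sym; lra. rewrite pd_sym. lra. }
    rewrite geod_pd in P by auto.
    assert (Rabs (t' - u) <= M).
    { unfold M. rewrite <- (phi_Tf (Rabs (t' - u))). apply phi_le; auto. pose proof (Tf_bounds (Rabs (t' - u))). lra. lra. }
    assert (t' - M <= u <= t' + M) by (apply Rabs_le_between' in H; lra).
    specialize (Hs u H0). unfold F in Hs. lra. }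
  exists s. split; [|split].
  - intros u. apply hdist_le_iff; auto. rewrite !(pd_sym y). apply Hmin.
  - rewrite !(pd_sym y). apply Hmin.
  - apply Rabs_le_between'. lra.
Qed.

Lemma ginv_ginv h : ginv (ginv h) = h.
Proof. destruct h as [a b]. unfold ginv; simpl. rewrite Cconj_conj.
  f_equal. apply injective_projections; simpl; ring. Qed.

Lemma hhull_disk vs w : (forall v, In v vs -> in_disk v) -> hhull vs w -> in_disk w.
Proof. intros Hv H. apply (H in_disk); auto. intros y z _ _ u [Hu _]. exact Hu. Qed.

Theorem lemma3p3 (G : C * C -> Prop) (vs : list C) (tau : C -> Prop)
  (l : R -> C) (x : C) (rho : R) :
  fuchsian G -> cocompact G ->
  hyp_polygon vs tau -> fundamental_domain G tau ->
  (forall i, (i < length vs)%nat -> exists g, side_pairing G vs tau i g) ->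
  (forall i g, (i < length vs)%nat -> side_pairing G vs tau i g ->
      ~ is_id_psu (gmul g g)) ->
  is_geodesic l -> (forall t, ex_derive l t) -> dense_in_ST G l ->
  interior_C tau x -> 0 < rho ->
  (forall k, is_geodesic k ->
     exists t g, G g /\ hdist (k t) (act g x) < rho) ->
  exists eps, 0 < eps /\ rel_dense eps (S_plus G l rho x).
Proof.
  intros [HSU [_ [Hmul [Hinv _]]]] [r [Hr Hcc]] [_ [Hvs [Htau _]]] _ _ _ Hl Hder _ Hint Hrho Hyp.
  assert (HG : forall g, G g -> kap g = 1) by (intros g Gg; apply HSU; auto).
  assert (Hx : in_disk x).
  { destruct Hint as [e [He Hi]]. apply (hhull_disk vs); auto. apply Htau. apply Hi.
    replace (x - x)%C with (RtoC 0) by ring. rewrite Cmod_0. auto. }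
  assert (r0 : 0 <= r).
  { destruct (Hcc (RtoC 0)) as [g [_ Hg]]. unfold in_disk. rewrite Cmod_0. lra.
    pose proof (Cmod_ge_0 (act g 0)). lra. }
  destruct (claimU G x rho r HG Hx (conj r0 Hr) Hyp) as [T [T0 HT]].
  set (c := Tf rho).
  assert (Bc : 0 <= c < 1).
  { unfold c. pose proof (Tf_bounds rho). split; [|lra]. apply Tf_ge0. lra. }
  pose proof (bnd_lt1 c Bc) as Bb.
  set (M := phi (2 * c / (1 + c ^ 2))).
  assert (M0 : 0 <= M) by (unfold M; rewrite <- phi_0; apply phi_le; lra).
  exists (T + M + 1). split. lra.
  intros t0. pose proof Hl as [Hd _].
  destruct (Hcc (l t0) (Hd t0)) as [h [Gh Hh]].
  set (f := fun u => act h (l (t0 + u))).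
  assert (Kh : 0 < kap h) by (rewrite HG; auto; lra).
  assert (Hf : is_geodesic f).
  { split. intros; apply act_disk; auto.
    intros s t. unfold f. rewrite hdist_pd, pd_act by auto. rewrite <- hdist_pd.
    destruct Hl as [_ Hg]. rewrite Hg. f_equal. ring. }
  assert (Hf0 : Cmod (f 0) <= r) by (unfold f; rewrite Rplus_0_r; auto).
  destruct (HT f Hf Hf0) as [tau0 [g [Htau0 [Gg Hp]]]].
  set (g' := gmul (ginv h) g).
  assert (Gg' : G g') by (apply Hmul; auto).
  assert (Gx : in_disk (act g x)) by (apply act_disk; auto; rewrite HG; auto; lra).
  assert (Y : act h (act g' x) = act g x).
  { unfold g'. rewrite act_comp.
    rewrite <- (ginv_ginv h) at 1. apply act_inv. rewrite kap_ginv; auto. auto.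
    apply den_nz; auto. rewrite HG; auto; lra.
    apply den_nz; auto. rewrite kap_ginv; auto. }
  set (y := act g' x).
  assert (Hy : in_disk y) by (apply act_disk; auto; rewrite HG; auto; lra).
  assert (Py : pd y (l (t0 + tau0)) < c).
  { rewrite pd_sym. rewrite <- (pd_act h) by auto. fold y in Y. rewrite Y. exact Hp. }
  destruct (foot_ex l y (t0 + tau0) c Hl Hder Hy ltac:(lra) Bc) as [s [Hs [Hs2 Hs3]]].
  exists s. split.
  - exists g'. split; auto. split; auto. exists s. split; auto. left.
    apply hdist_lt_iff; auto. fold y c. lra.
  - fold M in Hs3.
    replace (t0 - s) with (- tau0 - (s - (t0 + tau0))) by ring.
    eapply Rle_trans. apply Rabs_triang. rewrite Rabs_Ropp, Rabs_Ropp. lra.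
Qed.
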